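(* Let $(S,H)$ be a polarized K3 surface with $H^2=2d$, let $U\in D^b(S)$ be a spherical object with Mukai vector $(a,bH,c)$ for integers $a>0$, $b$, $c$, and let $\tau_U$ be the Hodge isometry of $\widetilde H(S,\mathbb Z)$ induced by the autoequivalence $\mathsf T_U\circ\mathsf T_{\mathcal O_S}\circ(-\otimes\mathcal O_S(H))$. Then $\tau_U^2=\mathrm{id}$ if and only if $d=5$ and $(a,b,c)$ belongs to the set $$\{(F_n+F_{n-2},-F_n,F_{n+2}+F_n),\ (F_{n+2}+F_n,-F_n,F_n+F_{n-2})\ :\ n\ge0\text{ even}\},$$ where $(F_n)_{n\in\mathbb Z}$ is defined by $F_n=1$ for $n\le1$ and $F_{n+2}=F_{n+1}+F_n$ for $n\ge0$.
   Context: An object $U\in D^b(S)$ is spherical if $\mathrm{Ext}^*(U,U)\cong H^*(S^2,\mathbb C)$; $\mathsf T_U$ is the spherical twist $F\mapsto\mathrm{Cone}(\mathrm{RHom}(U,F)\otimes U\to F)$. The Mukai vector is $v(E)=(\mathrm{rk}E,c_1(E),\mathrm{rk}E+c_1(E)^2/2-c_2(E))\in\widetilde H(S,\mathbb Z)$, and autoequivalences act on $\widetilde H(S,\mathbb Z)$ via their cohomological Fourier–Mukai transforms (Hodge isometries for the Mukai pairing). *)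

(* Defs.v *)
From HB Require Import structures.
From mathcomp Require Import all_boot all_order all_algebra.
Set Implicit Arguments. Unset Strict Implicit. Unset Printing Implicit Defensive.
Import Order.TTheory GRing.Theory Num.Theory.
Local Open Scope ring_scope.

(* Elements of the Mukai lattice  H~(S,Z) = H^0 + H^2 + H^4  as triples
   (r, l, s) with r, s : int and l in the lattice L = H^2(S,Z). *)
Definition mukai (L : zmodType) := (int * L * int)%type.

Definition mukai_pair (L : zmodType) (form : L -> L -> int)
  (x y : mukai L) : int :=
  let: (r, l, s) := x in let: (r', l', s') := y in
  form l l' - r * s' - r' * s.

(* Cohomological action of the spherical twist T_E (v = v(E), v^2 = -2):
   the reflection  x |-> x + <v,x> v. *)
Definition twistH (L : zmodType) (form : L -> L -> int) (v x : mukai L)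
  : mukai L :=
  let k := mukai_pair form v x in
  let: (r, l, s) := x in let: (a, m, c) := v in
  (r + k * a, l + m *~ k, s + k * c).

(* Cohomological action of (- (x) O_S(H)): multiplication by
   ch(O(H)) = exp(H) = (1, H, H^2/2), here H^2/2 = d. *)
Definition tensorH (L : zmodType) (form : L -> L -> int) (h : L) (d : int)
  (x : mukai L) : mukai L :=
  let: (r, l, s) := x in (r, l + h *~ r, s + form l h + r * d).

Definition vO (L : zmodType) : mukai L := (1, 0, 1).

Definition tauU (L : zmodType) (form : L -> L -> int) (h : L) (d : int)
  (v : mukai L) (x : mukai L) : mukai L :=
  twistH form v (twistH form (vO L) (tensorH form h d x)).

(* fib2 n = (F_n, F_{n+1}) for n : nat. *)
Fixpoint fib2 (n : nat) : int * int :=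
  match n with
  | 0%N => (1, 1)
  | k.+1 => let: (p, q) := fib2 k in (q, p + q)
  end.

Definition fibN (n : nat) : int := (fib2 n).1.

Lemma fibN_0 : fibN 0 = 1. Proof. by []. Qed.
Lemma fibN_1 : fibN 1 = 1. Proof. by []. Qed.
Lemma fibN_SS n : fibN n.+2 = fibN n.+1 + fibN n.
Proof. rewrite /fibN /=; case: (fib2 n) => p q /=. by rewrite addrC. Qed.

Definition Fz (n : int) : int :=
  match n with
  | Posz k => fibN k
  | Negz _ => 1
  end.

(* Main.v *)
Require Import Defs.
From HB Require Import structures.
From mathcomp Require Import all_boot all_order all_algebra.
From mathcomp Require Import ring lra zify.
Import Order.TTheory GRing.Theory Num.Theory.
Local Open Scope ring_scope.
Set Implicit Arguments. Unset Strict Implicit.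

Section Lin.
Variables (L : zmodType) (form : L -> L -> int).
Hypothesis form_addl : forall x y z, form (x + y) z = form x z + form y z.
Hypothesis form_sym : forall x y, form x y = form y x.

Lemma form0l y : form 0 y = 0.
Proof.
have H := form_addl 0 0 y; rewrite addr0 in H.
by apply: (addrI (form 0 y)); rewrite addr0 -H.
Qed.

Lemma formNl x y : form (- x) y = - form x y.
Proof.
have H := form_addl x (- x) y; rewrite subrr form0l in H.
apply/eqP; rewrite -addr_eq0 addrC -H //.
Qed.

Lemma form_mulz x y k : form (x *~ k) y = form x y * k.
Proof.
have Hn : forall n : nat, form (x *+ n) y = form x y * n%:Z.
  elim=> [|n IH]; first by rewrite mulr0n form0l mulr0.
  by rewrite mulrS form_addl IH -addn1 PoszD mulrDr mulr1 addrC.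
case: k => n; first by rewrite -Hn.
by rewrite NegzE mulrNz formNl Hn mulrN.
Qed.

Lemma form_mulzr x y k : form x (y *~ k) = form x y * k.
Proof. by rewrite form_sym form_mulz form_sym. Qed.

Lemma form_addr x y z : form x (y + z) = form x y + form x z.
Proof. by rewrite form_sym form_addl !(form_sym x). Qed.

Lemma form0r y : form y 0 = 0.
Proof. by rewrite form_sym form0l. Qed.

Variables (h : L) (D a b c : int).
Hypothesis hh : form h h = 2 * D.

Definition kf (r t s : int) := r*(2*D*b + a + c*D) + t*(b+c) + s*c.
Definition Rf r t s := -(s + t + r*D) + a * kf r t s.
Definition Kf r t s := r + b * kf r t s.
Definition Sf r t s := -r + c * kf r t s.

Lemma tau_eq r l s :
  tauU form h D (a, h *~ b, c) (r, l, s) =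
  (Rf r (form l h) s, l + h *~ Kf r (form l h) s, Sf r (form l h) s).
Proof.
rewrite /tauU /twistH /tensorH /vO /mukai_pair /Rf /Kf /Sf /kf.
rewrite mul0rz addr0 form0l.
rewrite !(form_addr, form_mulzr, form_mulz) (form_sym h l) hh.
congr (_, _, _); try ring.
rewrite -addrA -mulrzA -mulrzDr; congr (_ + h *~ _); ring.
Qed.
End Lin.
Set Implicit Arguments. Unset Strict Implicit.

Fixpoint trip (k : nat) : int * int * int :=
  match k with
  | 0%N => (2, 1, 3)
  | k'.+1 => let: (A, B, C) := trip k' in (C, C - B, 5 * (C - B) - C)
  end.

Lemma FzS2 (n : nat) : Fz (n%:Z + 2) = fibN n.+2.
Proof. by rewrite -[2]/(Posz 2) -PoszD addn2. Qed.

Lemma trip_S k A B C : trip k = (A, B, C) -> trip k.+1 = (C, C - B, 5 * (C - B) - C).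
Proof. by move=> /= ->. Qed.

Lemma tripE k : trip k =
  (Fz (k.*2)%:Z + Fz ((k.*2)%:Z - 2), Fz (k.*2)%:Z, Fz ((k.*2)%:Z + 2) + Fz (k.*2)%:Z).
Proof.
elim: k => [|k IH]; first by [].
rewrite (@trip_S k _ _ _ IH).
have -> : ((k.+1).*2)%:Z - 2 = (k.*2)%:Z.
  by rewrite doubleS -addn2 PoszD addrK.
rewrite doubleS !FzS2.
have E : forall n, Fz (Posz n) = fibN n by [].
rewrite !E !fibN_SS.
congr (_, _, _); ring.
Qed.

Lemma trip_prop k : let: (A, B, C) := trip k in
  [/\ 0 < A, A <= C, 0 < B, A + C = 5 * B & A * C = 5 * B ^+ 2 + 1].
Proof.
elim: k => [|k IH] //=.
case: (trip k) IH => [[A B] C] [HA HAC HB HS HP].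
split; nia.
Qed.

Lemma trip_sum k A B C : trip k = (A, B, C) -> A + C = 5 * B.
Proof. by move: (trip_prop k) => /[swap] ->; case. Qed.

Lemma hB1 (B : int) : 0 < B -> 0 <= (5 * B) ^+ 2 - 4 * (5 * B ^+ 2 + 1) ->
 0 <= 5 * B ^+ 2 + 1 - 2 * B * (5 * B) + 4 * B ^+ 2 -> B = 1.
Proof. nia. Qed.
Lemma ha2 (a c : int) : 0 < a -> a <= c -> a + c = 5 * 1 -> a * c = 5 * 1 ^+ 2 + 1 -> a = 2.
Proof. nia. Qed.
Lemma hpos (a a' : int) : 0 < a -> 0 < a' * a -> 0 < a'.
Proof. nia. Qed.
Lemma haB (a B d : int) : 0 < B -> 0 < d -> d * B * (a - B) = a ^+ 2 + 1 -> 0 < a - B.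
Proof. have h1 : 0 < d * B -> 0 < a ^+2 + 1 by nia. nia. Qed.
Lemma hle (a B d : int) : 0 < B -> d * B * (a - B) <= 2 * a * B -> d * (a - B) - a <= a.
Proof. nia. Qed.
Lemma hsq (a B : int) : 0 < a -> a < 2 * B -> a ^+ 2 + 1 <= 2 * a * B.
Proof. nia. Qed.
Lemma hprod (a c B : int) : 0 < B -> a <= c -> 2 * B <= a -> 
 0 <= (a - 2 * B) * (c - 2 * B). 
Proof. nia. Qed.
Lemma hd5 (B d : int) : 0 < B -> 0 < d -> 0 <= (d * B) ^+ 2 - 4 * (d * B ^+ 2 + 1) ->
 0 <= d * B ^+ 2 + 1 - 2 * B * (d * B) + 4 * B ^+ 2 -> d = 5.
Proof. nia. Qed.

Lemma descent (d : int) (N : nat) : forall a c B : int, B <= N%:Z -> 0 < a -> a <= c ->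
  0 < B -> 0 < d -> a + c = d * B -> a * c = d * B ^+ 2 + 1 ->
  d = 5 /\ exists k, trip k = (a, B, c).
Proof.
elim: N => [|N IH] a c B HBN Ha Hac HB Hd Hs Hp; first by lia.
have key : d * B * (a - B) = a ^+ 2 + 1.
  have -> : d * B * (a - B) = a * (d * B) - d * B ^+ 2 by ring.
  rewrite -Hs; have -> : d * B ^+ 2 = a * c - 1 by rewrite Hp; ring.
  ring.
have HaB : 0 < a - B by apply: (haB HB Hd key).
case: (ltrP a (2 * B)) => H2.
- set B' := a - B.
  set a' := d * B' - a.
  have Hp' : a' * a = d * B' ^+ 2 + 1.
    rewrite /a' /B'; apply/eqP; rewrite -subr_eq0.
    have -> : (d * (a - B) - a) * a - (d * (a - B) ^+ 2 + 1) = d * B * (a - B) - (a ^+ 2 + 1) by ring.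
    by rewrite key subrr.
  have Ha' : 0 < a'.
    apply: (hpos Ha); rewrite Hp'.
    have : 0 <= d * B' ^+ 2 by rewrite mulr_ge0 ?sqr_ge0 ?ltW.
    lia.
  have Haa : a' <= a.
    have h1 := hsq Ha H2.
    rewrite -key in h1.
    exact: (hle HB h1).
  have [d5 [k Hk]] := IH a' a B' ltac:(rewrite /B'; lia) Ha' Haa HaB Hd
     ltac:(rewrite /a'; ring) Hp'.
  split => //; exists k.+1.
  rewrite (@trip_S k _ _ _ Hk); rewrite /B' d5 in Hs *.
  congr (_, _, _); lia.
- have h1 := hprod HB Hac H2.
  have h2 : 0 <= (a - c) ^+ 2 by apply: sqr_ge0.
  have h3 : (a - c) ^+ 2 = (a + c) ^+ 2 - 4 * (a * c) by ring.
  rewrite h3 Hs Hp in h2.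
  have h4 : (a - 2 * B) * (c - 2 * B) = a * c - 2 * B * (a + c) + 4 * B ^+ 2 by ring.
  rewrite h4 Hs Hp in h1.
  have d5 := hd5 HB Hd h2 h1.
  subst d.
  have B1 := hB1 HB h2 h1.
  subst B.
  split => //; exists 0%N => /=.
  have a2 := ha2 Ha Hac Hs Hp.
  subst a; congr (_, _, _); lia.
Qed.

Lemma fwd_alg (a b c d : int) : 0 < d -> a * c = d * b ^+ 2 + 1 ->
  Rf d a b c (Rf d a b c 1 0 0) (2 * d * Kf d a b c 1 0 0) (Sf d a b c 1 0 0) = 1 ->
  Kf d a b c 1 0 0 + Kf d a b c (Rf d a b c 1 0 0) (2 * d * Kf d a b c 1 0 0) (Sf d a b c 1 0 0) = 0 ->
  Sf d a b c (Rf d a b c 1 0 0) (2 * d * Kf d a b c 1 0 0) (Sf d a b c 1 0 0) = 0 ->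
  Rf d a b c (Rf d a b c 0 0 1) (2 * d * Kf d a b c 0 0 1) (Sf d a b c 0 0 1) = 0 ->
  Kf d a b c 0 0 1 + Kf d a b c (Rf d a b c 0 0 1) (2 * d * Kf d a b c 0 0 1) (Sf d a b c 0 0 1) = 0 ->
  Sf d a b c (Rf d a b c 0 0 1) (2 * d * Kf d a b c 0 0 1) (Sf d a b c 0 0 1) = 1 ->
  a + c + d * b = 0.
Proof.
move=> Hd rel E1 E2 E3 F1 F2 F3.
have CH21 : (2*d + 2*b*c*d^+2 + 4*b^+2*d^+2 + 2*a*b*d) * (1 + (- 1 + d + c^+2 + 2*b*c*d + 2*b^+2*d^+2 + 2*a*c - a*c*d + 2*a*b*d + a^+2)) =
  - ((2*d + 2*b*c*d^+2 + 4*b^+2*d^+2 + 2*a*b*d) * (Rf d a b c (Rf d a b c 1 0 0) (2 * d * Kf d a b c 1 0 0) (Sf d a b c 1 0 0) - 1)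
     + ((1 + 2*b*c*d + 2*b^+2*d) - (1 - d + c^+2 + 2*b*c*d + 2*b^+2*d + a*c*d + 2*a*b*d + a^+2)) * (2 * d * (Kf d a b c 1 0 0 + Kf d a b c (Rf d a b c 1 0 0) (2 * d * Kf d a b c 1 0 0) (Sf d a b c 1 0 0)))
     + (2*b*c*d) * Sf d a b c (Rf d a b c 1 0 0) (2 * d * Kf d a b c 1 0 0) (Sf d a b c 1 0 0)).
  rewrite /Rf /Kf /Sf /kf; ring.
have CH13 : (- 1 + a*c) * (1 + (- 1 + d + c^+2 + 2*b*c*d + 2*b^+2*d^+2 + 2*a*c - a*c*d + 2*a*b*d + a^+2)) =
  - (((- d + a*c*d + 2*a*b*d + a^+2) - (1 - d + c^+2 + 2*b*c*d + 2*b^+2*d + a*c*d + 2*a*b*d + a^+2)) * Rf d a b c (Rf d a b c 0 0 1) (2 * d * Kf d a b c 0 0 1) (Sf d a b c 0 0 1)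
     + (- 1 + a*c + a*b) * (2 * d * (Kf d a b c 0 0 1 + Kf d a b c (Rf d a b c 0 0 1) (2 * d * Kf d a b c 0 0 1) (Sf d a b c 0 0 1)))
     + (- 1 + a*c) * (Sf d a b c (Rf d a b c 0 0 1) (2 * d * Kf d a b c 0 0 1) (Sf d a b c 0 0 1) - 1)).
  rewrite /Rf /Kf /Sf /kf; ring.
rewrite E1 E2 E3 subrr !mulr0 !addr0 oppr0 in CH21.
rewrite F1 F2 F3 subrr !mulr0 !addr0 oppr0 in CH13.
have He2 : 1 + (- 1 + d + c^+2 + 2*b*c*d + 2*b^+2*d^+2 + 2*a*c - a*c*d + 2*a*b*d + a^+2) = (a + c + d * b) ^+ 2 - d * (a * c - (d * b ^+ 2 + 1)) by ring.
rewrite He2 rel subrr mulr0 subr0 in CH21 CH13.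
apply/eqP; apply: contraT => Hs.
have Hs2 : (a + c + d * b) ^+ 2 != 0 by rewrite expf_neq0.
move/eqP: CH21; rewrite mulf_eq0 (negbTE Hs2) orbF => /eqP H21.
move/eqP: CH13; rewrite mulf_eq0 (negbTE Hs2) orbF => /eqP H13.
have Hb : b = 0.
  have : d * b ^+ 2 = 0 by move: H13; rewrite addrC addrK.
  move/eqP; rewrite mulf_eq0 expf_eq0 /= => /orP [/eqP Hd0|/eqP //].
  by rewrite Hd0 ltxx in Hd.
subst b; move: H21; rewrite !mulr0 !mul0r !addr0 => H21.
by move: H21 Hd; lia.
Qed.

Lemma bwd_alg (a b c d r t s : int) : a + c + d * b = 0 -> a * c = d * b ^+ 2 + 1 ->
  [/\ Rf d a b c (Rf d a b c r t s) (t + 2 * d * Kf d a b c r t s) (Sf d a b c r t s) = r,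
      Kf d a b c r t s + Kf d a b c (Rf d a b c r t s) (t + 2 * d * Kf d a b c r t s) (Sf d a b c r t s) = 0 &
      Sf d a b c (Rf d a b c r t s) (t + 2 * d * Kf d a b c r t s) (Sf d a b c r t s) = s].
Proof.
move=> Hs rel.
have ec : c = (a + c + d * b) - a - d * b by ring.
rewrite Hs in ec; subst c.
split; apply/eqP; rewrite -subr_eq0.
- have -> : Rf d a b (0 - a - d * b) (Rf d a b (0 - a - d * b) r t s) (t + 2 * d * Kf d a b (0 - a - d * b) r t s) (Sf d a b (0 - a - d * b) r t s) - r
    = (d * b ^+ 2 + 1 - a * (0 - a - d * b)) * (- t + d*s + d*t - 2*d*r + d^+2*r + 2*a*b*t - 2*a*b*d*s - 3*a*b*d*t + 4*a*b*d*r + a*b*d^+2*s + a*b*d^+2*t - 4*a*b*d^+2*r + a*b*d^+3*r - 2*a^+2*s - 2*a^+2*t + 2*a^+2*r + a^+2*d*s + a^+2*d*t - 3*a^+2*d*r + a^+2*d^+2*r).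
    rewrite /Rf /Kf /Sf /kf; ring.
  by rewrite -rel subrr mul0r.
- have -> : Kf d a b (0 - a - d * b) r t s + Kf d a b (0 - a - d * b) (Rf d a b (0 - a - d * b) r t s) (t + 2 * d * Kf d a b (0 - a - d * b) r t s) (Sf d a b (0 - a - d * b) r t s) - 0
    = (d * b ^+ 2 + 1 - a * (0 - a - d * b)) * (- s - t + r - d*r + 2*b^+2*t - 2*b^+2*d*s - 3*b^+2*d*t + 4*b^+2*d*r + b^+2*d^+2*s + b^+2*d^+2*t - 4*b^+2*d^+2*r + b^+2*d^+3*r - 2*a*b*s - 2*a*b*t + 2*a*b*r + a*b*d*s + a*b*d*t - 3*a*b*d*r + a*b*d^+2*r).
    rewrite /Rf /Kf /Sf /kf; ring.
  by rewrite -rel subrr mul0r.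
- have -> : Sf d a b (0 - a - d * b) (Rf d a b (0 - a - d * b) r t s) (t + 2 * d * Kf d a b (0 - a - d * b) r t s) (Sf d a b (0 - a - d * b) r t s) - s
    = (d * b ^+ 2 + 1 - a * (0 - a - d * b)) * (t + d*r - 2*b^+2*d*t + 2*b^+2*d^+2*s + 3*b^+2*d^+2*t - 4*b^+2*d^+2*r - b^+2*d^+3*s - b^+2*d^+3*t + 4*b^+2*d^+3*r - b^+2*d^+4*r - 2*a*b*t + 4*a*b*d*s + 5*a*b*d*t - 6*a*b*d*r - 2*a*b*d^+2*s - 2*a*b*d^+2*t + 7*a*b*d^+2*r - 2*a*b*d^+3*r + 2*a^+2*s + 2*a^+2*t - 2*a^+2*r - a^+2*d*s - a^+2*d*t + 3*a^+2*d*r - a^+2*d^+2*r).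
    rewrite /Rf /Kf /Sf /kf; ring.
  by rewrite -rel subrr mul0r.
Qed.

Unset Implicit Arguments.

Theorem theoremA16
  (L : zmodType) (form : L -> L -> int)
  (form_addl : forall x y z, form (x + y) z = form x z + form y z)
  (form_sym : forall x y, form x y = form y x)
  (h : L) (d : nat) (d_gt0 : (0 < d)%N) (hh : form h h = (2 * d)%:Z)
  (a b c : int) (a_gt0 : 0 < a)
  (spherical : mukai_pair form (a, h *~ b, c) (a, h *~ b, c) = -2) :
  (forall x : mukai L,
     tauU form h d%:Z (a, h *~ b, c) (tauU form h d%:Z (a, h *~ b, c) x) = x)
  <->
  (d = 5%N /\
   exists n : nat, ~~ odd n /\
     ((a, b, c) = (Fz n%:Z + Fz (n%:Z - 2), - Fz n%:Z, Fz (n%:Z + 2) + Fz n%:Z)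
      \/
      (a, b, c) = (Fz (n%:Z + 2) + Fz n%:Z, - Fz n%:Z, Fz n%:Z + Fz (n%:Z - 2)))).
Proof.
have hh' : form h h = 2 * d%:Z by rewrite hh PoszM.
have Dpos : 0 < d%:Z by rewrite ltz_nat.
have rel : a * c = d%:Z * b ^+ 2 + 1.
  move: spherical; rewrite /mukai_pair (form_mulz form_addl) (form_mulzr form_addl form_sym) hh' => sph.
  have e : 2 * (a * c - (d%:Z * b ^+ 2 + 1)) = - (2 * d%:Z * b * b - a * c - a * c + 2) by ring.
  rewrite sph addNr oppr0 in e.
  move/eqP: e; rewrite mulf_eq0 /= subr_eq0 => /eqP //.
have tE := tau_eq form_addl form_sym a b c hh'.
have formK : forall l k, form (l + h *~ k) h = form l h + 2 * d%:Z * k.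
  by move=> l k; rewrite form_addl (form_mulz form_addl) hh'.
have hK : forall k, h *~ k = 0 -> k = 0.
  move=> k /(congr1 (form^~ h)); rewrite (form_mulz form_addl) (form0l form_addl) hh' => /eqP.
  rewrite mulf_eq0 mulf_eq0 /= (gt_eqF Dpos) => /eqP //.
split.
- move=> H.
  have H1 := H (1, 0, 0).
  have H3 := H (0, 0, 1).
  rewrite (tE 1 0 0) (form0l form_addl) tE formK (form0l form_addl) add0r in H1.
  rewrite (tE 0 0 1) (form0l form_addl) tE formK (form0l form_addl) add0r in H3.
  case: H1 => E1 E2 E3.
  case: H3 => F1 F2 F3.
  move: E2; rewrite add0r -mulrzDr => /hK E2.
  move: F2; rewrite add0r -mulrzDr => /hK F2.
  have Hs := fwd_alg Dpos rel E1 E2 E3 F1 F2 F3.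
  set B := - b.
  have HsB : a + c = d%:Z * B.
    rewrite /B mulrN; apply/eqP; rewrite -subr_eq0 opprK Hs //.
  have relB : a * c = d%:Z * B ^+ 2 + 1 by rewrite /B sqrrN.
  have Hpos : 0 < d%:Z * B ^+ 2 + 1.
    have : 0 <= d%:Z * B ^+ 2 by rewrite mulr_ge0 ?sqr_ge0 ?ltW.
    lia.
  have Hc : 0 < c by apply: (hpos a_gt0); rewrite mulrC relB.
  have HB : 0 < B.
    have : 0 < d%:Z * B by rewrite -HsB; lia.
    by rewrite pmulr_rgt0.
  have HBN : B <= (`|B|%N)%:Z by lia.
  case: (lerP a c) => Hac.
  + have [d5 [k Hk]] := descent HBN a_gt0 Hac HB Dpos HsB relB.
    split; first by lia.
    exists k.*2; split; first by rewrite odd_double.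
    left; rewrite tripE in Hk; case: Hk => eA eB eC.
    rewrite eA eC; change (Fz (Posz k.*2)) with (fibN k.*2); by rewrite eB /B opprK.
  + have [d5 [k Hk]] := descent HBN Hc (ltW Hac) HB Dpos
       ltac:(by rewrite addrC) ltac:(by rewrite mulrC).
    split; first by lia.
    exists k.*2; split; first by rewrite odd_double.
    right; rewrite tripE in Hk; case: Hk => eA eB eC.
    rewrite eA eC; change (Fz (Posz k.*2)) with (fibN k.*2); by rewrite eB /B opprK.
- move=> [d5 [n [Hodd Hor]]].
  have nE : n = (n./2).*2 by rewrite -{1}(odd_double_half n) (negbTE Hodd) add0n.
  have Hsum := trip_sum (tripE n./2).
  rewrite -nE in Hsum.
  have Hs : a + c + d%:Z * b = 0.
    subst d; move: Hsum; case: Hor => [[-> -> ->]|[-> -> ->]] /=; lia.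
  move=> [[r l] s].
  rewrite (tE r l s) tE formK.
  have [e1 e2 e3] := @bwd_alg a b c d%:Z r (form l h) s Hs rel.
  by rewrite e1 e3 -addrA -mulrzDr e2 mulr0z addr0.
Qed.
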